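(* Let $n=p_1^{r_1}p_2^{r_2}\cdots p_k^{r_k}\ge 2$, where $p_1,\ldots,p_k$ are distinct primes and $r_i\ge1$. Then $\theta_t(G(n))=k$, and there is exactly one total clique covering of $G(n)$ consisting of precisely $k$ cliques.
   Context: For an integer $n\ge2$, $G(n)$ is the simple undirected graph whose vertex set is the set of divisors of $n$ greater than $1$, two distinct vertices $a,b$ being adjacent iff $\gcd(a,b)>1$. A clique is a set of pairwise adjacent vertices; a set $S$ of cliques of a graph is a total clique covering if every vertex lies in some member of $S$ and every edge has both endpoints in some member of $S$. $\theta_t(G)$ denotes the minimum size of a total clique covering of $G$. *)

(* Defs.v *)
From mathcomp Require Import all_boot.
Set Implicit Arguments. Unset Strict Implicit. Unset Printing Implicit Defensive.

(* Vertices of G(n): divisors d of n with d > 1 (encoded in 'I_n.+1). *)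
Definition divisor_vertex (n : nat) := {d : 'I_n.+1 | (1 < d) && (d %| n)}.

Definition Gadj (n : nat) (a b : divisor_vertex n) : bool :=
  (a != b) && (1 < gcdn (val (val a)) (val (val b))).

Section Cover.
Variables (T : finType) (adj : rel T).

Definition is_clique (C : {set T}) : bool :=
  [forall a in C, forall b in C, (a != b) ==> adj a b].

Definition is_tcc (S : {set {set T}}) : bool :=
  [&& [forall C in S, is_clique C],
      [forall v, exists C in S, v \in C] &
      [forall a, forall b, adj a b ==> [exists C in S, (a \in C) && (b \in C)]]].

(* minimum size of a total clique covering (default #|T|.+1 never reached
   for a symmetric adjacency relation, as singletons and edges form one) *)
Definition theta_t : nat :=
  \big[minn/#|{set T}|.+1]_(S : {set {set T}} | is_tcc S) #|S|.
End Cover.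

(* Main.v *)
Require Import Defs.
From mathcomp Require Import all_boot.
Set Implicit Arguments. Unset Strict Implicit. Unset Printing Implicit Defensive.

Lemma bigmin_le (I : eqType) (r : seq I) (Q : pred I) (F : I -> nat) x0 j :
  j \in r -> Q j -> \big[minn/x0]_(i <- r | Q i) F i <= F j.
Proof.
elim: r => // a r IH; rewrite in_cons big_cons => /orP [/eqP <- Qj|jr Qj].
  by rewrite Qj geq_minl.
case: (Q a); last exact: IH.
exact: leq_trans (geq_minr _ _) (IH jr Qj).
Qed.

Section G.
Variable n : nat.
Hypothesis hn : 2 <= n.
Local Notation T := (divisor_vertex n).

Definition vv (d : T) : nat := val (val d).

Lemma vv_inj : injective vv.
Proof. by move=> a b /val_inj /val_inj. Qed.

Lemma vvP (d : T) : (1 < vv d) && (vv d %| n).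
Proof. exact: (valP d). Qed.

Lemma vv_gt1 (d : T) : 1 < vv d.
Proof. by case/andP: (vvP d). Qed.

Lemma vv_dvd (d : T) : vv d %| n.
Proof. by case/andP: (vvP d). Qed.

Lemma mkv m : 1 < m -> m %| n -> exists v : T, vv v = m.
Proof.
move=> h1 h2.
have lt : m < n.+1 by rewrite ltnS; apply: dvdn_leq => //; apply: leq_trans hn.
have H : (1 < nat_of_ord (Ordinal lt)) && (nat_of_ord (Ordinal lt) %| n) by rewrite /= h1 h2.
by exists (exist _ (Ordinal lt) H).
Qed.

Definition P : {set T} := [set v | prime (vv v)].
Definition Cl (v : T) : {set T} := [set d | vv v %| vv d].

Lemma F1 v d : v \in P -> ((v == d) || Gadj v d) = (vv v %| vv d).
Proof.
rewrite inE => pv; rewrite /Gadj.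
have E : (1 < gcdn (vv v) (vv d)) = (vv v %| vv d).
  rewrite -(negbK (vv v %| vv d)) -prime_coprime // /coprime.
  have : 0 < gcdn (vv v) (vv d) by rewrite gcdn_gt0 prime_gt0.
  by case: (gcdn _ _) => [|[|k]].
rewrite /vv in E *; rewrite E.
case: eqP => [->|] /=; last by move=> _; case: (_ %| _).
by rewrite dvdnn.
Qed.

Lemma F2 v w : v \in P -> w \in P -> Gadj v w = false.
Proof.
move=> pv pw; apply/negP => g.
have : (v == w) || Gadj v w by rewrite g orbT.
rewrite F1 //; move: pw; rewrite inE => pw.
move: (pv); rewrite inE => pv'.
rewrite dvdn_prime2 // => /eqP /vv_inj E.
by move: g; rewrite /Gadj E eqxx.
Qed.

Lemma F3 d : exists2 v, v \in P & vv v %| vv d.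
Proof.
have g1 := vv_gt1 d.
have [v Ev] : exists v : T, vv v = pdiv (vv d).
  apply: mkv; first by rewrite prime_gt1 // pdiv_prime.
  exact: dvdn_trans (pdiv_dvd _) (vv_dvd d).
exists v; first by rewrite inE Ev pdiv_prime.
by rewrite Ev pdiv_dvd.
Qed.

Lemma Cl_clique v : v \in P -> is_clique (@Gadj n) (Cl v).
Proof.
move=> pv; apply/forall_inP => a; rewrite inE => ha; apply/forall_inP => b.
rewrite inE => hb; apply/implyP => nab; rewrite /Gadj nab /=.
have : vv v %| gcdn (vv a) (vv b) by rewrite dvdn_gcd ha hb.
move=> h; apply: leq_trans (vv_gt1 v) _; apply: dvdn_leq h.
by rewrite gcdn_gt0 (leq_trans _ (vv_gt1 a)).
Qed.

Definition S0 := Cl @: P.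

Lemma S0_tcc : is_tcc (@Gadj n) S0.
Proof.
apply/and3P; split.
- by apply/forall_inP => C /imsetP [v pv ->]; apply: Cl_clique.
- apply/forallP => d; apply/exists_inP; have [v pv h] := F3 d.
  by exists (Cl v); [apply: imset_f | rewrite inE].
- apply/forallP => a; apply/forallP => b; apply/implyP => /andP [_ g].
  have [w Ew] : exists w : T, vv w = pdiv (gcdn (vv a) (vv b)).
    apply: mkv; first by rewrite prime_gt1 // pdiv_prime.
    apply: dvdn_trans (pdiv_dvd _) _; apply: dvdn_trans (dvdn_gcdl _ _) (vv_dvd a).
  have pw : w \in P by rewrite inE Ew pdiv_prime.
  apply/exists_inP; exists (Cl w); first exact: imset_f.
  have hd := pdiv_dvd (gcdn (vv a) (vv b)).
  rewrite !inE Ew; apply/andP; split.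
    exact: dvdn_trans hd (dvdn_gcdl _ _).
  exact: dvdn_trans hd (dvdn_gcdr _ _).
Qed.

Lemma card_S0 : #|S0| = #|P|.
Proof.
rewrite card_in_imset // => v w pv pw E.
have : v \in Cl w by rewrite -E inE dvdnn.
rewrite inE -F1 // => /orP [/eqP -> //|].
by rewrite F2.
Qed.

Lemma card_P : #|P| = size (primes n).
Proof.
rewrite cardE -(size_map vv); apply: perm_size; apply: uniq_perm.
- by rewrite map_inj_uniq ?enum_uniq //; exact: vv_inj.
- exact: primes_uniq.
move=> x; apply/mapP/idP.
  case=> v; rewrite mem_enum inE => pv ->.
  by rewrite mem_primes pv (leq_trans _ hn) // vv_dvd.
rewrite mem_primes => /and3P [px n0 xd].
have [v Ev] := mkv (prime_gt1 px) xd.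
by exists v; rewrite // mem_enum inE Ev.
Qed.

Section Any.
Variable S : {set {set T}}.
Hypothesis tS : is_tcc (@Gadj n) S.

Definition h (v : T) : {set T} := odflt set0 [pick C in S | v \in C].

Lemma hP v : h v \in S /\ v \in h v.
Proof.
case/and3P: tS => _ /forallP /(_ v) /exists_inP [C CS vC] _.
rewrite /h; case: pickP => [C' /andP [] //|/(_ C)].
by rewrite CS vC.
Qed.

Lemma cliqueS C a b : C \in S -> a \in C -> b \in C -> a != b -> Gadj a b.
Proof.
case/and3P: tS => /forall_inP cl _ _ CS aC bC nab.
by move: (cl C CS) => /forall_inP /(_ a aC) /forall_inP /(_ b bC) /implyP; apply.
Qed.

Lemma h_inj : {in P &, injective h}.
Proof.
move=> v w pv pw E; apply/eqP; apply/negPn/negP => nvw.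
have [hS hv] := hP v; have [_ hw] := hP w.
rewrite -E in hw.
by move: (cliqueS hS hv hw nvw); rewrite F2.
Qed.

Lemma lowerS : #|P| <= #|S|.
Proof.
rewrite -(card_in_imset h_inj); apply: subset_leq_card.
by apply/subsetP => C /imsetP [v _ ->]; case: (hP v).
Qed.

Hypothesis cS : #|S| = #|P|.

Lemma hS : h @: P = S.
Proof.
apply/eqP; rewrite eqEcard cS (card_in_imset h_inj) leqnn andbT.
by apply/subsetP => C /imsetP [v _ ->]; case: (hP v).
Qed.

Lemma h_Cl v : v \in P -> h v = Cl v.
Proof.
move=> pv; have [hvS hv] := hP v.
apply/setP => d; rewrite inE -F1 //; apply/idP/idP.
  move=> dh; case: (eqVneq v d) => [//|nvd].
  by rewrite (cliqueS hvS hv dh nvd) orbT.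
case/orP => [/eqP <- //|g].
case/and3P: tS => _ _ /forallP /(_ v) /forallP /(_ d) /implyP /(_ g).
case/exists_inP => C' C'S /andP [vC dC].
move: C'S; rewrite -hS => /imsetP [w pw E]; subst C'.
have [_ hw] := hP w.
case: (eqVneq v w) => [-> //|nvw].
by move: (cliqueS (proj1 (hP w)) vC hw nvw); rewrite F2.
Qed.

Lemma S_eq : S = S0.
Proof. by rewrite -hS; apply: eq_in_imset => v; apply: h_Cl. Qed.
End Any.
End G.

Theorem theorem4 (n : nat) (hn : 2 <= n) :
  theta_t (@Gadj n) = size (primes n) /\
  exists! S : {set {set divisor_vertex n}},
    is_tcc (@Gadj n) S /\ #|S| = size (primes n).
Proof.
split.
  apply/eqP; rewrite eqn_leq; apply/andP; split.
    rewrite -(card_P hn) -card_S0 /theta_t.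
    apply: bigmin_le; [exact: mem_index_enum | exact: S0_tcc].
  rewrite /theta_t; apply: (big_ind (fun x => size (primes n) <= x)).
  - rewrite -(card_P hn) -card_S0 ltnW // ltnS; exact: max_card.
  - by move=> x y hx hy; rewrite leq_min hx hy.
  - by move=> S tS; rewrite -(card_P hn); apply: lowerS.
exists (S0 n); split.
  by split; [exact: S0_tcc | rewrite card_S0 (card_P hn)].
move=> S [tS cS]; rewrite -(card_P hn) in cS.
by rewrite (S_eq tS cS).
Qed.
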